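(* Let $L_i,L_j$ be two smooth curves on a smooth surface $S$ meeting transversally at exactly one point $P$. Consider a sequence of blowups $Y\to S$: first blow up $P$; then, at each subsequent step, blow up one of the two points where the most recently created exceptional $(-1)$-curve meets its two neighbouring visible curves (the visible curves being the strict transforms of $L_i,L_j$ and of the exceptional curves). Let $E$ be the last exceptional curve, and let $w_i,w_j$ be the coefficients of $E$ in the total transforms of $L_i$ and $L_j$ on $Y$. Let $\Gamma$ be the dual graph of the visible curves on $Y$; it is a chain from $v_i$ (the vertex of $L_i$) to $v_j$ (the vertex of $L_j$), where an exceptional curve $C$ is marked $-C^2$ and $v_i$, $v_j$ are marked by the number of blowups centered at points of the strict transform of $L_i$, respectively $L_j$. Let $\Gamma_i$ be the subchain on the side of $E$ containing $v_i$ and $\Gamma_j$ the subchain on the side containing $v_j$ (both not containing $E$). Then (1) $\det\Gamma_i=w_i$ and $\det(\Gamma_i-v_i)=w_j$; (2) $\det\Gamma_j=w_j$ and $\det(\Gamma_j-v_j)=w_i$. Moreover, the assignment of $(w_i,w_j)$ to such a sequence of blowups is a bijection between all such sequences and the pairs of coprime positive integers $(w_i,w_j)$ (equivalently, positive rational numbers $w_j/w_i$ in lowest terms).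
   Context: The determinant of a chain (or of any marked graph) is the determinant of the matrix with the marks on the diagonal and $-1$ for each pair of adjacent vertices, $0$ otherwise; the empty chain has determinant $1$. $\Gamma_i-v_i$ is the chain $\Gamma_i$ with the vertex $v_i$ removed. *)

(* Defs.v *)
From mathcomp Require Import all_boot all_order all_algebra.
Set Implicit Arguments. Unset Strict Implicit. Unset Printing Implicit Defensive.
Import GRing.Theory Num.Theory.

(* A visible curve on the current surface is recorded as (mark, a, b):
   - mark = -C^2 for an exceptional curve C; for the strict transform of L_i
     (resp. L_j) it is the number of blowups so far centered on it;
   - a, b = coefficient of the curve in the total transforms of L_i, L_j
     (for the strict transforms of L_i and L_j themselves: (1,0) and (0,1)).
   The dual graph of visible curves is a chain, stored left (v_i) to right
   (v_j) as a sequence; a state also records the position of the most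
   recently created exceptional (-1)-curve. *)
Definition curve := (nat * nat * nat)%type.
Definition mark (c : curve) : nat := c.1.1.
Definition coef_i (c : curve) : nat := c.1.2.
Definition coef_j (c : curve) : nat := c.2.
Definition state := (seq curve * nat)%type.

Definition dflt : curve := (0, 0, 0).

(* one more blowup centered on the curve at position i: its mark grows by 1
   (self-intersection drops by one, or one more blowup on L_i / L_j). *)
Definition bump (i : nat) (c : seq curve) : seq curve :=
  set_nth dflt c i (let: (m, a, b) := nth dflt c i in (m.+1, a, b)).

(* After blowing up P on S: chain L_i -- E_1 -- L_j. *)
Definition init_state : state := ([:: (1, 1, 0); (1, 1, 1); (1, 0, 1)], 1).

(* Blow up the point where the newest exceptional curve (position k) meets its
   left neighbour (left = true) or its right neighbour (left = false).  The new
   (-1)-curve is inserted between them; its coefficient in the total transform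
   of L_i (resp. L_j) is the sum of those of the two curves through the center. *)
Definition step (st : state) (left : bool) : state :=
  let: (c, k) := st in
  let n := if left then k.-1 else k.+1 in
  let E := nth dflt c k in
  let N := nth dflt c n in
  let new : curve := (1, coef_i E + coef_i N, coef_j E + coef_j N) in
  let c' := bump n (bump k c) in
  let p := if left then k else k.+1 in
  (take p c' ++ new :: drop p c', p).

(* The sequence of blowups determined by the list of choices after the first one. *)
Definition blowups (s : seq bool) : state := foldl step init_state s.

Definition chain_marks (s : seq bool) : seq nat := map mark (blowups s).1.
Definition last_pos (s : seq bool) : nat := (blowups s).2.
Definition w_i (s : seq bool) : nat := coef_i (nth dflt (blowups s).1 (last_pos s)).
Definition w_j (s : seq bool) : nat := coef_j (nth dflt (blowups s).1 (last_pos s)).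

Definition chain_mx (m : seq nat) : 'M[int]_(size m) :=
  \matrix_(x < size m, y < size m)
    (if x == y then Posz (nth 0%N m x)
     else if (x.+1 == y :> nat) || (y.+1 == x :> nat) then (-1)%R else 0%R).
Definition chain_det (m : seq nat) : int := \det (chain_mx m).

(* Main.v *)
Require Import Defs.
From mathcomp Require Import all_boot all_order all_algebra.
From mathcomp Require Import zify ring.
Set Implicit Arguments. Unset Strict Implicit. Unset Printing Implicit Defensive.
Import GRing.Theory Num.Theory.
Local Open Scope ring_scope.

Definition ce (m : seq nat) (i j : nat) : int :=
  if i == j then Posz (nth 0%N m i)
  else if (i.+1 == j) || (j.+1 == i) then (-1) else 0.

Lemma chain_mxE m i j : chain_mx m i j = ce m i j.
Proof. by rewrite mxE. Qed.

Lemma ce_shift x m i j : ce (x :: m) i.+1 j.+1 = ce m i j.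
Proof. by rewrite /ce /= !eqSS. Qed.

Lemma det_cons2 x y r :
  chain_det [:: x, y & r] = (Posz x) * chain_det (y :: r) - chain_det r.
Proof.
rewrite /chain_det (expand_det_row _ ord0).
rewrite big_ord_recl big_ord_recl big1 ?addr0; last first.
  by move=> i _; rewrite mxE /= mul0r.
rewrite !mxE /= /cofactor /=.
have -> : row' ord0 (col' ord0 (chain_mx [:: x, y & r])) = chain_mx (y :: r).
  apply/matrixP => i j; rewrite !mxE /=.
  by rewrite (inj_eq (@lift_inj _ ord0)) /bump /= !add1n !eqSS.
rewrite (expand_det_col (row' ord0 (col' (lift ord0 ord0) _)) ord0) big_ord_recl big1 ?addr0; last first.
  by move=> i _; rewrite !mxE /= mul0r.
rewrite !mxE /= /cofactor.
have -> : row' ord0 (col' ord0 (row' ord0 (col' (lift ord0 ord0) (chain_mx [:: x, y & r])))) = chain_mx r.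
  apply/matrixP => i j; rewrite !mxE /=.
  by rewrite -val_eqE /= /bump /= !add1n !eqSS add0n.
rewrite /bump /= !add0n expr0 expr1.
by rewrite !mul1r !mulN1r opprK.
Qed.

Lemma det_nil : chain_det [::] = 1.
Proof. by rewrite /chain_det det_mx00. Qed.

Lemma det_one x : chain_det [:: x] = Posz x.
Proof. by rewrite /chain_det det_mx11 mxE. Qed.


Inductive M4 := Mk of int & int & int & int.
Definition m11 (M : M4) := let: Mk p _ _ _ := M in p.
Definition m12 (M : M4) := let: Mk _ q _ _ := M in q.
Definition m21 (M : M4) := let: Mk _ _ u _ := M in u.
Definition mulM (A B : M4) : M4 :=
  let: Mk p q u v := A in let: Mk p' q' u' v' := B in
  Mk (p * p' + q * u') (p * q' + q * v') (u * p' + v * u') (u * q' + v * v').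
Arguments mulM : simpl never.
Definition Tm (x : nat) := Mk (Posz x) (-1) 1 0.
Definition I4 := Mk 1 0 0 1.
Definition Mt (m : seq nat) : M4 := foldr (fun x M => mulM (Tm x) M) I4 m.

Lemma Mt_cons x m : Mt (x :: m) = mulM (Tm x) (Mt m).
Proof. by []. Qed.
Lemma Mt_nil : Mt [::] = I4.
Proof. by []. Qed.

Lemma mulMA A B C : mulM A (mulM B C) = mulM (mulM A B) C.
Proof. case: A => ????; case: B => ????; case: C => ????; rewrite /mulM; congr Mk; ring. Qed.

Lemma mulM1 A : mulM A I4 = A.
Proof. case: A => ????; rewrite /mulM /I4; congr Mk; ring. Qed.
Lemma mul1M A : mulM I4 A = A.
Proof. case: A => ????; rewrite /mulM /I4; congr Mk; ring. Qed.

Lemma Mt_rcons m x : Mt (rcons m x) = mulM (Mt m) (Tm x).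
Proof.
elim: m => [|y m IH]; first by rewrite [rcons _ _]/= Mt_cons Mt_nil mulM1 mul1M.
by rewrite rcons_cons !Mt_cons IH mulMA.
Qed.

Lemma Tm_bump_r x : Tm x.+1 = mulM (Tm x) (Mk 1 0 (-1) 1).
Proof. rewrite /mulM /Tm; congr Mk; rewrite ?PoszD; ring. Qed.

Lemma Tm_bump_l x : Tm x.+1 = mulM (Mk 1 1 0 1) (Tm x).
Proof. rewrite /mulM /Tm; congr Mk; rewrite ?PoszD; ring. Qed.

Lemma det_Mt m : chain_det m = m11 (Mt m).
Proof.
move: {2}(size m) (leqnn (size m)) => n; elim: n m => [|n IH] [|x [|y r]] //.

- by rewrite det_nil.
- by rewrite det_nil.
- by rewrite det_one Mt_cons Mt_nil mulM1.
- move=> Hs; have H1 : (size (y :: r) <= n)%N by [].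
  have H2 : (size r <= n)%N by apply: ltnW.
  rewrite det_cons2 (IH _ H1) (IH _ H2).
  rewrite !Mt_cons; case: (Mt r) => p q u v; rewrite /mulM /Tm /=; ring.
Qed.

Lemma det_behead x m : chain_det m = m21 (Mt (x :: m)).
Proof. rewrite det_Mt Mt_cons; case: (Mt m) => p q u v; rewrite /mulM /Tm /=; ring. Qed.

Lemma det_droplast x m : chain_det m = - m12 (Mt (rcons m x)).
Proof. rewrite det_Mt Mt_rcons; case: (Mt m) => p q u v; rewrite /mulM /Tm /=; ring. Qed.

Local Close Scope ring_scope.
Definition bumpc (c : curve) : curve := let: (m, a, b) := c in (m.+1, a, b).

Section SeqL.
Variable T : Type.
Variable x0 : T.
Lemma nth_sc (L R : seq T) i : nth x0 (L ++ R) (size L + i) = nth x0 R i.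
Proof. by elim: L => // y L IH; rewrite [size _]/= addSn /=. Qed.
Lemma set_nth_sc (L R : seq T) i v :
  set_nth x0 (L ++ R) (size L + i) v = L ++ set_nth x0 R i v.
Proof. by elim: L => // y L IH; rewrite [size _]/= addSn /= IH. Qed.
Lemma take_sc (L R : seq T) i : take (size L + i) (L ++ R) = L ++ take i R.
Proof. by elim: L => // y L IH; rewrite [size _]/= addSn /= IH. Qed.
Lemma drop_sc (L R : seq T) i : drop (size L + i) (L ++ R) = drop i R.
Proof. by elim: L => // y L IH; rewrite [size _]/= addSn /= IH. Qed.
Lemma nth_sc0 (L R : seq T) : nth x0 (L ++ R) (size L) = nth x0 R 0.
Proof. by rewrite -(nth_sc L R 0) addn0. Qed.
Lemma nth_sc1 (L R : seq T) : nth x0 (L ++ R) (size L).+1 = nth x0 R 1.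
Proof. by rewrite -(nth_sc L R 1) addn1. Qed.
Lemma nth_sc2 (L R : seq T) : nth x0 (L ++ R) (size L).+2 = nth x0 R 2.
Proof. by rewrite -(nth_sc L R 2) addn2. Qed.
Lemma take_sc1 (L R : seq T) : take (size L).+1 (L ++ R) = L ++ take 1 R.
Proof. by rewrite -(take_sc L R 1) addn1. Qed.
Lemma take_sc2 (L R : seq T) : take (size L).+2 (L ++ R) = L ++ take 2 R.
Proof. by rewrite -(take_sc L R 2) addn2. Qed.
Lemma drop_sc1 (L R : seq T) : drop (size L).+1 (L ++ R) = drop 1 R.
Proof. by rewrite -(drop_sc L R 1) addn1. Qed.
Lemma drop_sc2 (L R : seq T) : drop (size L).+2 (L ++ R) = drop 2 R.
Proof. by rewrite -(drop_sc L R 2) addn2. Qed.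
End SeqL.

Lemma bump_sc L R i : Defs.bump (size L + i) (L ++ R) = L ++ Defs.bump i R.
Proof. by rewrite /Defs.bump nth_sc set_nth_sc. Qed.
Lemma bump_sc0 L R : Defs.bump (size L) (L ++ R) = L ++ Defs.bump 0 R.
Proof. by rewrite -(bump_sc L R 0) addn0. Qed.
Lemma bump_sc1 L R : Defs.bump (size L).+1 (L ++ R) = L ++ Defs.bump 1 R.
Proof. by rewrite -(bump_sc L R 1) addn1. Qed.
Lemma bump_sc2 L R : Defs.bump (size L).+2 (L ++ R) = L ++ Defs.bump 2 R.
Proof. by rewrite -(bump_sc L R 2) addn2. Qed.

Lemma step_left L N e M R :
  step (L ++ N :: e :: M :: R, (size L).+1) true =
  (L ++ bumpc N :: (1, coef_i e + coef_i N, coef_j e + coef_j N)%N :: bumpc e :: M :: R,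
   (size L).+1).
Proof.
rewrite /step /= nth_sc0 nth_sc1 bump_sc1 bump_sc0 take_sc1 drop_sc1 /= -catA /=.
by [].
Qed.

Lemma step_right L N e M R :
  step (L ++ N :: e :: M :: R, (size L).+1) false =
  (rcons L N ++ bumpc e :: (1, coef_i e + coef_i M, coef_j e + coef_j M)%N :: bumpc M :: R,
   (size (rcons L N)).+1).
Proof.
rewrite /step /= nth_sc1 nth_sc2 bump_sc1 bump_sc2 take_sc2 drop_sc2 /= -catA /= cat_rcons size_rcons.
by [].
Qed.

Definition nbstep (S : nat * nat * nat * nat) (x : bool) :=
  let: (a, b, c, d) := S in if x then (a, b, a + c, b + d) else (a + c, b + d, c, d).
Definition nb s := foldl nbstep (1, 0, 0, 1) s.

Definition Inv (s : seq bool) : Prop :=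
  let: (a, b, c, d) := nb s in
  exists L mN mM R,
    blowups s = (L ++ (mN, a, b) :: (1, a + c, b + d) :: (mM, c, d) :: R, (size L).+1)
    /\ Mt (rcons (map mark L) mN) = Mk (Posz (a + c)) (- Posz a)%R (Posz (b + d)) (- Posz b)%R
    /\ Mt (mM :: map mark R) = Mk (Posz (b + d)) (- Posz (a + c))%R (Posz d) (- Posz c)%R.

Lemma Inv_all s : Inv s.
Proof.
elim/last_ind: s => [|s x IH].
  exists [::], 1, 1, [::]; split; first by [].
  by split; rewrite /Mt /= /mulM /Tm /I4 /=.
rewrite /Inv /nb foldl_rcons -/(nb s).
move: IH; rewrite /Inv.
case: (nb s) => [[[a b] c] d] [L [mN [mM [R [Hb [HL HR]]]]]].
rewrite /blowups foldl_rcons -/(blowups s) Hb.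
case: x.
- exists L, mN.+1, 2, ((mM, c, d) :: R); split; [|split].
  + by rewrite step_left /= (addnC (a + c) a) (addnC (b + d) b).
  + rewrite Mt_rcons Tm_bump_r mulMA -Mt_rcons HL /mulM; congr Mk; rewrite !PoszD; ring.
  + rewrite Mt_cons HR /mulM /Tm; congr Mk; rewrite !PoszD; ring.
- exists (rcons L (mN, a, b)), 2, mM.+1, R; split; [|split].
  + by rewrite step_right.
  + rewrite map_rcons Mt_rcons HL /mulM /Tm; congr Mk; rewrite !PoszD; ring.
  + rewrite Mt_cons Tm_bump_l -mulMA -Mt_cons HR /mulM; congr Mk; rewrite !PoszD; ring.
Qed.

Definition W s := let: (a, b, c, d) := nb s in (a + c, b + d).

Lemma wW s : (w_i s, w_j s) = W s.
Proof.
have := Inv_all s; rewrite /Inv /W.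
case: (nb s) => [[[a b] c] d] [L [mN [mM [R [Hb _]]]]].
by rewrite /w_i /w_j /last_pos Hb /= nth_sc1.
Qed.

Definition lm (g S : nat * nat * nat * nat) :=
  let: (g1, g2, g3, g4) := g in let: (a, b, c, d) := S in
  (g1 * a + g2 * b, g3 * a + g4 * b, g1 * c + g2 * d, g3 * c + g4 * d).

Lemma nbstep_lm g S x : nbstep (lm g S) x = lm g (nbstep S x).
Proof.
case: g => [[[g1 g2] g3] g4]; case: S => [[[a b] c] d]; case: x => /=;
  congr (_, _, _, _); ring.
Qed.

Lemma foldl_lm g S s : foldl nbstep (lm g S) s = lm g (foldl nbstep S s).
Proof. by elim: s S => //= x s IH S; rewrite nbstep_lm IH. Qed.

Lemma W_nil : W [::] = (1, 1).
Proof. by []. Qed.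

Lemma W_true s : W (true :: s) = ((W s).1 + (W s).2, (W s).2).
Proof.
rewrite /W /nb /=.
have -> : (1, 0, 1, 1) = lm (1, 1, 0, 1) (1, 0, 0, 1) by [].
rewrite foldl_lm; case: (foldl _ _ _) => [[[a b] c] d] /=; congr (_, _); ring.
Qed.

Lemma W_false s : W (false :: s) = ((W s).1, (W s).1 + (W s).2).
Proof.
rewrite /W /nb /=.
have -> : (1, 1, 0, 1) = lm (1, 0, 1, 1) (1, 0, 0, 1) by [].
rewrite foldl_lm; case: (foldl _ _ _) => [[[a b] c] d] /=; congr (_, _); ring.
Qed.

Lemma W_good s : [&& 0 < (W s).1, 0 < (W s).2 & coprime (W s).1 (W s).2].
Proof.
elim: s => [|[] s IH]; first by [].
- rewrite W_true /=; case/and3P: IH => h1 h2 h3.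
  by rewrite addn_gt0 h1 h2 /= /coprime gcdnC gcdnDr gcdnC.
- rewrite W_false /=; case/and3P: IH => h1 h2 h3.
  by rewrite addn_gt0 h1 h2 /= /coprime gcdnDl.
Qed.

Lemma W_inj s1 s2 : W s1 = W s2 -> s1 = s2.
Proof.
elim: s1 s2 => [|x1 s1 IH] [|x2 s2] //.
- have := W_good s2; case: x2; rewrite ?W_true ?W_false W_nil;
    case/and3P => h1 h2 _ [] ?; lia.
- have := W_good s1; case: x1; rewrite ?W_true ?W_false W_nil;
    case/and3P => h1 h2 _ [] ?; lia.
- have := W_good s1; have := W_good s2.
  case: x1; case: x2; rewrite ?W_true ?W_false;
  case: (W s1) (IH s2) => p1 q1; case: (W s2) => p2 q2 /= IH' /and3P[h1 h2 _] /and3P[h3 h4 _] [] E1 E2;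
  try (congr (_ :: _); apply: IH'; congr (_, _); lia); lia.
Qed.

Lemma W_surj p q : 0 < p -> 0 < q -> coprime p q -> exists s, W s = (p, q).
Proof.
move: {2}(p + q) (leqnn (p + q)) => n; elim: n p q => [|n IH] p q Hn hp hq hc.
  lia.
case: (ltngtP p q) => Hpq.
- have hc' : coprime p (q - p) by rewrite -(subnKC (ltnW Hpq)) /coprime gcdnDl in hc.
  have [||s Hs] := IH p (q - p) _ hp _ hc'; try lia.
  by exists (false :: s); rewrite W_false Hs /=; congr (_, _); lia.
- have hc' : coprime (p - q) q.
    by rewrite -(subnK (ltnW Hpq)) /coprime gcdnC gcdnDr gcdnC in hc.
  have [||s Hs] := IH (p - q) q _ _ hq hc'; try lia.
  by exists (true :: s); rewrite W_true Hs /=; congr (_, _); lia.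
- subst q; move: hc; rewrite /coprime gcdnn => /eqP ->.
  by exists [::].
Qed.

Lemma part1 (s : seq bool) :
     let G := chain_marks s in
     let k := last_pos s in
     let Gi := take k G in
     let Gj := drop k.+1 G in
     [/\ chain_det Gi = Posz (w_i s),
         chain_det (behead Gi) = Posz (w_j s),
         chain_det Gj = Posz (w_j s)
       & chain_det (take (size Gj).-1 Gj) = Posz (w_i s)].
Proof.
have := wW s; have := Inv_all s; rewrite /Inv /W.
case: (nb s) => [[[a b] c] d] [L [mN [mM [R [Hb [HL HR]]]]]] [-> ->].
rewrite /chain_marks /last_pos Hb /= -map_take -map_drop take_sc1 drop_sc2 /=.
rewrite map_cat /= cats1.
have [x [t Et]] : exists x t, rcons (map mark L) mN = x :: t.
  by case: (map mark L) => [|y l]; [exists mN, [::] | exists y, (rcons l mN)].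
have [t' [y Et']] : exists t' y, mM :: map mark R = rcons t' y.
  case/lastP E: (mM :: map mark R) => [|t' y] //; by exists t', y.
split.
- by rewrite det_Mt HL.
- by rewrite Et /= (det_behead x) -Et HL.
- by rewrite det_Mt HR.
- have Hsz : size (map mark R) = size t' by move/(congr1 size): Et'; rewrite size_rcons => -[].
  rewrite Et' Hsz -cats1 take_size_cat // (det_droplast y) -Et' HR /=.
  by rewrite opprK.
Qed.

Theorem theorem3p5 :
  (forall s : seq bool,
     let G := chain_marks s in
     let k := last_pos s in
     let Gi := take k G in          (* Gamma_i, starting at v_i *)
     let Gj := drop k.+1 G in       (* Gamma_j, ending at v_j *)
     [/\ chain_det Gi = Posz (w_i s),
         chain_det (behead Gi) = Posz (w_j s),
         chain_det Gj = Posz (w_j s)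
       & chain_det (take (size Gj).-1 Gj) = Posz (w_i s)])
  /\ injective (fun s : seq bool => (w_i s, w_j s))
  /\ (forall s : seq bool, [&& 0 < w_i s, 0 < w_j s & coprime (w_i s) (w_j s)])
  /\ (forall p q : nat, 0 < p -> 0 < q -> coprime p q ->
        exists s : seq bool, (w_i s, w_j s) = (p, q)).
Proof.
split; first exact: part1.
split; first by move=> s1 s2 /=; rewrite !wW; apply: W_inj.
split.
  by move=> s; have := W_good s; rewrite -wW.
move=> p q hp hq hc; have [s Hs] := W_surj hp hq hc.
by exists s; rewrite wW.
Qed.
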